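(* Let $r,s,t\in[0,1]$. (i) If $s\prec r\prec t$, then $d(s,t)\ge\min(x_r^t,\Delta_r-x_r^t)$. (ii) If $s<t$, then $d(s,t)\le X^{\mathrm{exc}}_s+X^{\mathrm{exc}}_{t-}-2I_s^t$.
   Context: Fix $\alpha\in(1,2)$. Let $X$ be the spectrally positive $\alpha$-stable Lévy process with $\mathbb{E}[e^{-\lambda X_t}]=e^{t\lambda^\alpha}$ ($\lambda>0$). With $\underline g_1=\sup\{s\le1:X_s=\inf_{[0,s]}X\}$ and $\underline d_1=\inf\{s>1:X_s=\inf_{[0,s]}X\}$, the normalized excursion is $X^{\mathrm{exc}}_s=(\underline d_1-\underline g_1)^{-1/\alpha}(X_{\underline g_1+s(\underline d_1-\underline g_1)}-X_{\underline g_1})$, $s\in[0,1]$. Write $\Delta_t=X^{\mathrm{exc}}_t-X^{\mathrm{exc}}_{t-}$ for $t\in(0,1]$, $\Delta_0=0$, $X^{\mathrm{exc}}_{0-}=0$, $I_s^t=\inf_{[s,t]}X^{\mathrm{exc}}$. For $s,t\in[0,1]$: $s\preccurlyeq t$ iff $s\le t$ and $X^{\mathrm{exc}}_{s-}\le I_s^t$; $s\prec t$ iff $s\preccurlyeq t$ and $s\ne t$; $s\wedge t$ is the most recent common ancestor of $s,t$ for $\preccurlyeq$. For $s\preccurlyeq t$, $x_s^t=I_s^t-X^{\mathrm{exc}}_{s-}\in[0,\Delta_s]$. For $a,b\in[0,\Delta_t]$, $\delta_t(a,b)=\min(|a-b|,\Delta_t-|a-b|)$. For $s\preccurlyeq t$,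 $d_0(s,t)=\sum_{s\prec r\preccurlyeq t}\delta_r(0,x_r^t)$; for all $s,t$, $d(s,t)=\delta_{s\wedge t}(x^s_{s\wedge t},x^t_{s\wedge t})+d_0(s\wedge t,s)+d_0(s\wedge t,t)$. *)

(* Defs.v *)
From HB Require Import structures.
From mathcomp Require Import all_boot all_order all_algebra.
From mathcomp Require Import all_classical all_reals all_analysis.
Set Implicit Arguments. Unset Strict Implicit. Unset Printing Implicit Defensive.
Import Order.TTheory GRing.Theory Num.Theory.
Import numFieldNormedType.Exports.
Local Open Scope classical_set_scope.
Local Open Scope ring_scope.

Section PathDefs.
Variable R : realType.
Implicit Types (e f : R -> R) (s t u r v a b : R).

Definition Iinf f s t : R := inf [set f u | u in `[s, t]].

Definition lft f t : R := if t == 0 then 0 else lim (f x @[x --> t^'-]).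

Definition jmp f t : R := if t == 0 then 0 else f t - lft f t.

Definition anc f s t : Prop :=
  [/\ 0 <= s, t <= 1, s <= t & lft f s <= Iinf f s t].

Definition sanc f s t : Prop := anc f s t /\ s <> t.

Definition mrca f s t : R :=
  xget 0 [set u | anc f u s /\ anc f u t /\
                  (forall v, anc f v s -> anc f v t -> anc f v u)].

Definition xpos f s t : R := Iinf f s t - lft f s.

Definition ldelta f t a b : R := Num.min `|a - b| (jmp f t - `|a - b|).

Definition d0 f s t : \bar R :=
  (\esum_(r in [set r | sanc f s r /\ anc f r t]) (ldelta f r 0 (xpos f r t))%:E)%E.

Definition ldist f s t : \bar R :=
  let u := mrca f s t in
  ((ldelta f u (xpos f u s) (xpos f u t))%:E + d0 f u s + d0 f u t)%E.

Definition runinf f s : R := Iinf f 0 s.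
Definition gone f : R := sup [set s | 0 <= s <= 1 /\ f s = runinf f s].
Definition done_ f : R := inf [set s | 1 < s /\ f s = runinf f s].

Definition normexc (alpha : R) f : R -> R := fun s =>
  (done_ f - gone f) `^ (- alpha^-1) *
  (f (gone f + s * (done_ f - gone f)) - f (gone f)).
End PathDefs.

Section ProcessDefs.
Local Open Scope ereal_scope.
Context {R : realType} {d : measure_display} {T : measurableType d}.

Definition mutually_indep (P : probability T R) (n : nat) (Y : 'I_n -> T -> R) : Prop :=
  forall B : 'I_n -> set R, (forall i, measurable (B i)) ->
    P (\bigcap_(i in [set: 'I_n]) (Y i @^-1` B i)) = \prod_(i < n) P (Y i @^-1` B i).

(* X is the spectrally positive alpha-stable Levy process with
   E[exp(-lambda X_t)] = exp(t lambda^alpha); we take a cadlag version. *)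
Definition stable_spos_levy (alpha : R) (P : probability T R) (X : R -> T -> R) : Prop :=
  (forall w, X 0%R w = 0%R) /\
      (forall t, measurable_fun setT (X t)) /\
      (forall w t, (0 <= t)%R -> X^~ w x @[x --> t^'+] --> X t w) /\
      (forall w t, (0 < t)%R -> cvg (X^~ w x @[x --> t^'-])) /\
      (forall n (ts : 'I_n.+1 -> R), (0 <= ts ord0)%R ->
          (forall i j : 'I_n.+1, (i <= j)%N -> (ts i <= ts j)%R) ->
          mutually_indep P (fun i : 'I_n => fun w =>
             (X (ts (lift ord0 i)) w - X (ts (widen_ord (leqnSn n) i)) w)%R)) /\
      (forall s t (B : set R), (0 <= s)%R -> (0 <= t)%R -> measurable B ->
          P [set w | (X (s + t) w - X s w)%R \in B] = P [set w | X t w \in B]) /\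
      (forall t lam, (0 <= t)%R -> (0 < lam)%R ->
          \int[P]_w (expR (- (lam * X t w)))%:E = (expR (t * lam `^ alpha))%:E).
End ProcessDefs.

(* Main.v *)
Require Import Defs.
From HB Require Import structures.
From mathcomp Require Import all_boot all_order all_algebra.
From mathcomp Require Import all_classical all_reals all_analysis.
From mathcomp Require Import ring lra.
Import Order.TTheory GRing.Theory Num.Theory.
Import numFieldNormedType.Exports.
Set Implicit Arguments. Unset Strict Implicit. Unset Printing Implicit Defensive.
Local Open Scope classical_set_scope.
Local Open Scope ring_scope.

Section Det.
Context {R : realType}.
Implicit Types (e : R -> R).

Definition lbd e := exists M, forall x, 0 <= x <= 1 -> M <= e x.

Lemma Iinf_le e s t x : lbd e -> 0 <= s -> t <= 1 -> s <= x <= t ->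
  Iinf e s t <= e x.
Proof.
move=> [M HM] s0 t1 /andP[sx xt]; rewrite /Iinf.
have : has_lbound [set e u | u in `[s, t]].
  exists M => _ [u /= + <-]; rewrite in_itv /= => /andP[su ut].
  apply: HM; apply/andP; split; [exact: le_trans su|exact: le_trans t1].
move/ge_inf; apply; exists x => //=; rewrite in_itv /=; exact/andP.
Qed.

Lemma Iinf_ge e s t B : s <= t -> (forall x, s <= x <= t -> B <= e x) ->
  B <= Iinf e s t.
Proof.
move=> st H; rewrite /Iinf; apply: lb_le_inf.
  by exists (e s), s => //=; rewrite in_itv /= lexx st.
by move=> _ [u /= + <-]; rewrite in_itv /= => /H.
Qed.

Lemma Iinf_ss e s : lbd e -> 0 <= s <= 1 -> Iinf e s s = e s.
Proof.
move=> he /andP[s0 s1]; apply/le_anti/andP; split.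
  by apply: Iinf_le => //; rewrite lexx.
by apply: Iinf_ge => // x /andP[a b]; have -> : x = s by apply/le_anti; rewrite b a.
Qed.

Lemma Iinf_split e a b c : lbd e -> 0 <= a -> a <= b -> b <= c -> c <= 1 ->
  Iinf e a c = Num.min (Iinf e a b) (Iinf e b c).
Proof.
move=> he a0 ab bc c1; apply/le_anti/andP; split.
  rewrite le_min; apply/andP; split.
    apply: Iinf_ge => // x /andP[ax xb].
    by apply: Iinf_le => //; rewrite ax (le_trans xb bc).
  apply: Iinf_ge => // x /andP[bx xc].
  by apply: Iinf_le => //; rewrite xc (le_trans ab bx).
apply: Iinf_ge; first exact: le_trans bc.
move=> x /andP[ax xc]; have [xb|bx] := leP x b.
  rewrite ge_min; apply/orP; left; apply: Iinf_le => //; [exact: le_trans bc c1|].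
  by rewrite ax xb.
rewrite ge_min; apply/orP; right; apply: Iinf_le => //; first exact: le_trans ab.
by rewrite (ltW bx) xc.
Qed.

Lemma Iinf_mono e a a' b' b : lbd e -> 0 <= a -> a <= a' -> a' <= b' -> b' <= b ->
  b <= 1 -> Iinf e a b <= Iinf e a' b'.
Proof.
move=> he a0 aa ab bb b1; apply: Iinf_ge => // x /andP[ax xb].
apply: Iinf_le => //; rewrite (le_trans aa ax) (le_trans xb bb) //.
Qed.

Lemma Iinf_lt e s t B : s <= t -> Iinf e s t < B ->
  exists x, s <= x <= t /\ e x < B.
Proof.
move=> st H; apply: contrapT => Hn; move: H; apply/negP; rewrite -leNgt.
apply: Iinf_ge => // x xI; rewrite leNgt; apply/negP => ex; apply: Hn.
by exists x.
Qed.

Definition hasll e := forall t, 0 < t <= 1 -> cvg (e x @[x --> t^'-]).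

Lemma lft_ge e u r B : hasll e -> u < r -> 0 < r <= 1 ->
  (forall x, u < x < r -> B <= e x) -> B <= lft e r.
Proof.
move=> hl ur /andP[r0 r1] H; rewrite /lft gt_eqF //.
apply: limr_ge; first by apply: hl; rewrite r0 r1.
near=> x; apply: H; apply/andP; split; near: x.
  exact: nbhs_left_gt.
exact: nbhs_left_lt.
Unshelve. all: by end_near.
Qed.

Lemma lft_geI e u r : lbd e -> hasll e -> 0 <= u -> u < r -> r <= 1 ->
  Iinf e u r <= lft e r.
Proof.
move=> he hl u0 ur r1; apply: (@lft_ge _ u) => //; first by rewrite r1 andbT; exact: (le_lt_trans u0 ur).
move=> x /andP[ux xr]; apply: Iinf_le => //; by rewrite !ltW.
Qed.

Lemma Iinf_le_lft e r t : lbd e -> hasll e -> 0 <= r -> r < t -> t <= 1 ->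
  Iinf e r t <= lft e t.
Proof. exact: lft_geI. Qed.


Definition yv e t r := if r == t then 0 else xpos e r t.

Lemma chain e t B (l : seq R) : lbd e -> hasll e -> t <= 1 ->
  (forall w, 0 <= w -> w < t -> Iinf e w t <= B) -> sorted <%O l ->
  forall w, 0 <= w -> w < t -> (forall r, r \in l -> w < r <= t) ->
  \sum_(r <- l) yv e t r <= B - Iinf e w t.
Proof.
move=> he hl t1 HB; elim: l => [|r1 l IH] srt w w0 wt Hl.
  by rewrite big_nil subr_ge0; apply: HB.
rewrite big_cons.
have /andP[wr1 r1t] := Hl r1 (mem_head _ _).
have pl : path <%O r1 l by exact: srt.
have /allP allr : all (fun x => r1 < x) l.
  by apply: order_path_min => //; exact: lt_trans.
have [r1E|r1t'] := eqVneq r1 t.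
  have -> : l = [::].
    case: l srt Hl pl allr {IH} => // a l _ Hl _ allr.
    have /andP[_ at'] : w < a <= t by apply: Hl; rewrite !inE eqxx orbT.
    have := allr a (mem_head _ _).
    by rewrite r1E ltNge at'.
  by rewrite /yv r1E eqxx big_nil addr0 subr_ge0; apply: HB.
have r1lt : r1 < t by rewrite lt_neqAle r1t' r1t.
have r10 : 0 <= r1 by rewrite ltW // (le_lt_trans w0 wr1).
have IH' := IH (path_sorted pl) r1 r10 r1lt.
have Hl' : forall r, r \in l -> r1 < r <= t.
  move=> r rl; rewrite allr //=.
  by have /andP[_ ->] : w < r <= t by apply: Hl; rewrite inE rl orbT.
have := IH' Hl'.
rewrite /yv (negbTE r1t') /xpos => H.
have : Iinf e w t <= lft e r1.
  have := @lft_geI e w r1 he hl w0 wr1 (le_trans r1t t1).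
  apply: le_trans; apply: Iinf_mono => //; exact: ltW.
move=> H2.
set S := \sum_(r <- l) _ in H *.
lra.
Qed.

Lemma d0_le e u t B : lbd e -> hasll e -> 0 <= u -> t <= 1 ->
  (forall w, 0 <= w -> w < t -> Iinf e w t <= B) -> Iinf e u t <= B ->
  (d0 e u t <= (B - Iinf e u t)%:E)%E.
Proof.
move=> he hl u0 t1 HB HuB; rewrite /d0; apply: ge_ereal_sup => _ [A [finA AD] <-].
rewrite fsbig_finite //=.
set l := finmap.enum_fset _.
have Hl : forall r, r \in l -> [/\ u < r, r <= t & anc e r t].
  move=> r; rewrite /l in_fset_set // inE => /AD [[[u0' r1 ur ie] unr] art].
  split => //; last by case: art.
  by rewrite lt_neqAle ur andbT; apply/eqP.
have Hp : perm_eq (sort <=%O l) l by rewrite perm_sort perm_refl.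
rewrite -(perm_big _ Hp).
rewrite big_seq.
apply: (@le_trans _ _ (\sum_(r <- sort <=%O l | r \in sort <=%O l) (yv e t r)%:E)%E).
  apply: lee_sum => r; rewrite mem_sort => /Hl [ur rt [r0 _ _ hr]].
  rewrite lee_fin /ldelta /yv.
  have r0' : r != 0 by rewrite gt_eqF // (le_lt_trans u0 ur).
  case: eqP => [rE|_].
    rewrite rE in ur r0' *.
    rewrite /jmp /xpos (negbTE r0') Iinf_ss //; last first.
      by rewrite t1 ltW // (le_lt_trans u0 ur).
    by rewrite ge_min; apply/orP; right; rewrite sub0r normrN subr_le0 ler_norm.
  rewrite ge_min; apply/orP; left; rewrite sub0r normrN ger0_norm //.
  by rewrite /xpos subr_ge0.
rewrite -big_seq sumEFin lee_fin.
have [ut|tu] := ltP u t.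
  apply: chain => //.
  - by rewrite sort_lt_sorted finmap.fset_uniq.
  - by move=> r; rewrite mem_sort => /Hl [ur rt _]; rewrite ur rt.
have -> : sort <=%O l = [::].
  case E : (sort <=%O l) => [//|a s].
  have : a \in sort <=%O l by rewrite E mem_head.
  rewrite mem_sort => /Hl [ua at' _].
  by move: (lt_le_trans ua (le_trans at' tu)); rewrite ltxx.
by rewrite big_nil subr_ge0.
Qed.

Lemma jmpE e s : e 0 = 0 -> jmp e s = e s - lft e s.
Proof. by move=> e0; rewrite /jmp /lft; case: eqP => [->|]; rewrite ?e0 ?subr0. Qed.

Lemma lft0 e : lft e 0 = 0.
Proof. by rewrite /lft eqxx. Qed.

Lemma anc_trans e s r t : lbd e -> hasll e -> anc e s r -> s <> r -> anc e r t ->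
  anc e s t.
Proof.
move=> he hl [s0 r1 sr hs] nsr [r0 t1 rt hr].
have slr : s < r by rewrite lt_neqAle sr andbT; apply/eqP.
split => //; first exact: le_trans rt.
rewrite (Iinf_split he s0 sr rt t1) le_min hs /=.
apply: le_trans hs _; apply: le_trans hr.
exact: lft_geI.
Qed.

Lemma esum_ge0' (S : set R) (a : R -> \bar R) : (0 <= esum S a)%E.
Proof. by apply: esum_ge; exists set0; [exact: fsets_set0|rewrite fsbig_set0]. Qed.

Lemma part_i e r s t : e 0 = 0 -> lbd e -> hasll e -> sanc e s r -> sanc e r t ->
  ((Num.min (xpos e r t) (jmp e r - xpos e r t))%:E <= ldist e s t)%E.
Proof.
move=> e0 he hl [asr nsr] [art nrt].
have ast := anc_trans he hl asr nsr art.
case: (asr) => s0 r1 sr hs; case: (art) => r0 t1 rt hr.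
have s1 : s <= 1 by exact: le_trans r1.
have ass : anc e s s.
  split => //; rewrite Iinf_ss ?s0 //; apply: le_trans hs _.
  by apply: Iinf_le => //; rewrite lexx.
rewrite /ldist /=.
have -> : mrca e s t = s.
  apply: xget_unique; first by split => // v.
  move=> y [ays [ayt H]]; have [_ _ ys _] := ays; have [_ _ sy _] := H s ass ast.
  by apply/le_anti; rewrite ys sy.
apply: lee_paddl.
  apply: adde_ge0; last exact: esum_ge0'.
  rewrite lee_fin /ldelta /xpos jmpE // Iinf_ss ?s0 //.
  have h1 : Iinf e s t <= e s by apply: Iinf_le => //; rewrite lexx (le_trans sr rt).
  have h2 : lft e s <= Iinf e s t by case: ast.
  have -> : e s - lft e s - (Iinf e s t - lft e s) = e s - Iinf e s t by ring.
  rewrite ger0_norm ?subr_ge0 //.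
  rewrite le_min; apply/andP; split; first by rewrite subr_ge0.
  have -> : e s - lft e s - (e s - Iinf e s t) = Iinf e s t - lft e s by ring.
  by rewrite subr_ge0.
rewrite /d0; apply: esum_ge; exists [set r].
  split; first exact: finite_set1.
  by move=> _ ->; split => //; split.
rewrite fsbig_set1 lee_fin /ldelta sub0r normrN ger0_norm //.
by rewrite /xpos subr_ge0.
Qed.


Lemma near_left_delta (a : R) (P : R -> Prop) : (\forall x \near a^'-, P x) ->
  exists2 d, 0 < d & forall x, a - d < x < a -> P x.
Proof.
rewrite near_withinE => /nbhs_ballP [d /= d0 H]; exists d => // x /andP[h1 h2].
apply: H => //; rewrite /ball /= gtr0_norm ?subr_gt0 //.
by rewrite ltrBlDr -ltrBlDl.
Qed.

Definition Cset e s t := fun v => anc e v s /\ anc e v t.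

Lemma mrca_spec e s t : lbd e -> hasll e -> 0 <= s -> s <= t -> t <= 1 ->
  ((forall v, ~ Cset e s t v) /\ mrca e s t = 0) \/
  (Cset e s t (mrca e s t) /\ forall v, Cset e s t v -> v <= mrca e s t).
Proof.
move=> he hl s0 st t1.
have s1 : s <= 1 by exact: le_trans t1.
case: (pselect (exists v, Cset e s t v)) => [[c Cc]|nC]; last first.
  left; split; first by move=> v Cv; apply: nC; exists v.
  by apply: xgetPN => v [hs [ht _]]; apply: nC; exists v.
right.
suff [u Su] : exists u, [/\ anc e u s, anc e u t &
    (forall v, anc e v s -> anc e v t -> anc e v u)].
  have := @xgetPex _ 0 [set u | anc e u s /\ anc e u t /\
                  (forall v, anc e v s -> anc e v t -> anc e v u)].
  case: Su => a b c'; case=> [|]; first by exists u.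
  move=> A [B D]; rewrite /mrca; split; first by [].
  by move=> v [Cv1 Cv2]; have [_ _ ->] := D v Cv1 Cv2.
set C := Cset e s t.
have ubC : ubound C s by move=> v [[_ _ vs _] _].
have neC : C !=set0 by exists c.
have hsC : has_sup C by split => //; exists s.
set us := sup C.
have cus : c <= us by apply: ub_le_sup => //; exists s.
have c0 : 0 <= c by case: Cc => -[].
have us0 : 0 <= us by exact: le_trans cus.
have uss : us <= s by apply: ge_sup.
have us1 : us <= 1 by exact: le_trans s1.
suff Lu : lft e us <= Iinf e us t.
  exists us; split.
  - split => //; apply: le_trans Lu _; apply: Iinf_mono => //.
  - by split => //; exact: le_trans st.
  - move=> v hvs hvt; have Cv : C v by [].
    have vus : v <= us by apply: ub_le_sup => //; exists s.
    case: hvt => v0 _ vt hv; split => //.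
    by apply: le_trans hv _; apply: Iinf_mono => //; exact: le_trans st.
case: (pselect (C us)) => [[_ [_ _ _ //]]|nCus].
rewrite leNgt; apply/negP => Hlt.
have usp : 0 < us.
  rewrite lt_neqAle us0 andbT; apply/negP => /eqP u0.
  have cE : c = us by apply/le_anti; rewrite cus -u0 c0.
  by apply: nCus; rewrite -cE.
have Lcv : e x @[x --> us^'-] --> lft e us.
  by rewrite /lft (gt_eqF usp); apply: hl; rewrite usp us1.
set J := Iinf e us t in Hlt *; set L := lft e us in Hlt Lcv *.
have JK : J < (J + L) / 2 by lra.
have KL : (J + L) / 2 < L by lra.
have [d d0 Hd] := near_left_delta (cvgr_gt L Lcv ((J + L) / 2) KL).
have d'0 : 0 < Num.min d us by rewrite lt_min d0 usp.
have [c' Cc' c'd] := sup_adherent d'0 hsC.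
have c'us : c' <= us by apply: ub_le_sup => //; exists s.
have c'lt : c' < us.
  by rewrite lt_neqAle c'us andbT; apply/eqP => ce; apply: nCus; rewrite -ce.
have dmus : Num.min d us <= us by rewrite ge_min lexx orbT.
have dmd : Num.min d us <= d by rewrite ge_min lexx.
have c'0 : 0 < c' by apply: le_lt_trans c'd; rewrite subr_ge0.
have K1 : (J + L) / 2 <= lft e c'.
  apply: (@lft_ge e (us - Num.min d us)) => //.
    by rewrite c'0 (le_trans c'us us1).
  move=> x /andP[h1 h2]; apply/ltW; apply: Hd; apply/andP; split.
    by apply: le_lt_trans h1; rewrite lerD2l lerN2.
  exact: lt_trans c'lt.
have K2 : lft e c' <= J.
  case: Cc' => _ [c'0' _ c't hc]; apply: le_trans hc _.
  by apply: Iinf_mono => //; rewrite ?(le_trans uss st).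
by move: (le_trans K1 K2); rewrite leNgt JK.
Qed.


Definition rcont e := forall t, 0 <= t < 1 -> e x @[x --> t^'+] --> e t.

Lemma P3 e s t u : lbd e -> hasll e -> rcont e -> 0 <= s -> s < t -> t <= 1 ->
  Cset e s t u -> (forall v, Cset e s t v -> v <= u) ->
  Iinf e u t = Iinf e s t.
Proof.
move=> he hl hr s0 st t1 [[u0 s1 us hus] [_ _ ut hut]] umax.
have ts : s <= t := ltW st.
apply/le_anti/andP; split; first by apply: Iinf_mono.
set m := Iinf e s t.
rewrite leNgt; apply/negP => Hlt.
have Hus : Iinf e u s < m.
  by move: Hlt; rewrite (Iinf_split he u0 us ts t1) gt_min ltxx orbF.
have [w0 [/andP[uw0 w0s] ew0]] := Iinf_lt us Hus.
set W := fun v => u <= v <= s /\ e v < m.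
have ubW : ubound W s by move=> v [/andP[_ ->]].
have Ww0 : W w0 by split => //; rewrite uw0 w0s.
have hsW : has_sup W by split; [exists w0|exists s].
set v0 := sup W.
have w0v0 : w0 <= v0 by apply: ub_le_sup => //; exists s.
have v0s : v0 <= s by apply: ge_sup => //; exists w0.
have uv0 : u <= v0 := le_trans uw0 w0v0.
have v00 : 0 <= v0 := le_trans u0 uv0.
have mes : m <= e s by apply: Iinf_le => //; rewrite lexx.
have Key1 : forall x, v0 < x <= s -> m <= e x.
  move=> x /andP[v0x xs]; rewrite leNgt; apply/negP => exm.
  have : x <= v0 by apply: ub_le_sup; [exists s | split => //; rewrite xs (le_trans uv0 (ltW v0x))].
  by rewrite leNgt v0x.
have Key2 : m <= e v0.
  rewrite leNgt; apply/negP => ev0.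
  have v0s' : v0 < s.
    rewrite lt_neqAle v0s andbT; apply/eqP => v0E.
    by move: ev0; rewrite v0E ltNge mes.
  have hrv : e x @[x --> v0^'+] --> e v0.
    by apply: hr; rewrite v00 (lt_le_trans v0s' s1).
  have nE := cvgr_lt (e v0) hrv m ev0.
  have [x [h1 h2 h3]] : exists x, [/\ v0 < x, x < s & e x < m].
    apply: (@filter_ex _ (v0^'+) _).
    near=> x; split.
    - by near: x; apply: nbhs_right_gt.
    - by near: x; apply: nbhs_right_lt.
    - by near: x; exact: nE.
  by move: (Key1 x); rewrite h1 (ltW h2) => /(_ erefl); rewrite leNgt h3.
have Key3 : m <= Iinf e v0 t.
  apply: Iinf_ge; first exact: le_trans ts.
  move=> x /andP[v0x xt].
  have [xs|sx] := leP x s.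
    have [v0E|v0x'] := eqVneq v0 x; first by rewrite -v0E.
    by apply: Key1; rewrite xs andbT lt_neqAle v0x' v0x.
  by apply: Iinf_le => //; rewrite (ltW sx) xt.
have w0lt : w0 < v0.
  rewrite lt_neqAle w0v0 andbT; apply/eqP => wE.
  by move: ew0; rewrite wE ltNge Key2.
have v0p : 0 < v0 := le_lt_trans (le_trans u0 uw0) w0lt.
have Key4 : lft e v0 <= m.
  rewrite leNgt; apply/negP => Hm.
  have Lcv : e x @[x --> v0^'-] --> lft e v0.
    by rewrite /lft (gt_eqF v0p); apply: hl; rewrite v0p (le_trans v0s s1).
  have [d d0 Hd] := near_left_delta (cvgr_gt _ Lcv m Hm).
  have [w Ww wd] := sup_adherent d0 hsW.
  have wv0 : w <= v0 by apply: ub_le_sup => //; exists s.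
  have wlt : w < v0.
    rewrite lt_neqAle wv0 andbT; apply/eqP => wE.
    by case: Ww => _; rewrite wE ltNge Key2.
  have := Hd w; rewrite wd wlt => /(_ erefl).
  by case: Ww => _ ewm; rewrite ltNge (ltW ewm).
have Cv0 : Cset e s t v0.
  split; split => //; try exact: le_trans ts.
  - apply: le_trans Key4 _; apply: le_trans Key3 _; apply: Iinf_mono => //.
  - exact: le_trans Key4 Key3.
have := umax v0 Cv0; rewrite leNgt => /negP; apply.
exact: le_lt_trans uw0 w0lt.
Unshelve. all: by end_near.
Qed.


Lemma Iinf_le_end e a b : lbd e -> 0 <= a -> a <= b -> b <= 1 -> Iinf e a b <= e b.
Proof. by move=> he a0 ab b1; apply: Iinf_le => //; rewrite ab lexx. Qed.

Lemma esum_le0' (S : set R) (a : R -> \bar R) :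
  (forall r, S r -> (a r <= 0)%E) -> (esum S a <= 0)%E.
Proof.
move=> H; apply: ge_ereal_sup => _ [A [finA AS] <-].
by apply: fsume_le0 => r Ar; apply: H; apply: AS.
Qed.

Lemma esum_empty (S : set R) (a : R -> \bar R) :
  (forall r, ~ S r) -> esum S a = 0%E.
Proof.
move=> H; rewrite (_ : S = set0) ?esum_set0 //.
by apply/predeqP => r; split => // /H.
Qed.

Lemma ldelta_le e u a b : ldelta e u a b <= `|a - b|.
Proof. by rewrite /ldelta ge_min lexx. Qed.

Lemma ldelta_le0 e u a b : jmp e u = 0 -> ldelta e u a b <= 0.
Proof.
by rewrite /ldelta => ->; rewrite ge_min; apply/orP; right; rewrite sub0r oppr_le0.
Qed.

Lemma part_ii_R e s t : e 0 = 0 -> lbd e -> hasll e -> rcont e ->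
  0 <= s -> s < t -> t <= 1 ->
  (ldist e s t <= (e s + lft e t - 2 * Iinf e s t)%:E)%E.
Proof.
move=> e0 he hl hr s0 st t1.
have ts := ltW st; have s1 : s <= 1 := le_trans ts t1.
have t0 : 0 < t := le_lt_trans s0 st.
have Iss : Iinf e s t <= e s by apply: Iinf_le => //; rewrite lexx.
have Ilt : Iinf e s t <= lft e t by apply: Iinf_le_lft.
rewrite /ldist /=.
case: (mrca_spec he hl s0 ts t1) => [[nC ->]|[Cu umax]].
- have dl : ldelta e 0 (xpos e 0 s) (xpos e 0 t) <= 0.
    by apply: ldelta_le0; rewrite /jmp eqxx.
  have d0t : d0 e 0 t = 0%E.
    apply: esum_empty => r [[a0r n0r] art]; apply: (nC 0).
    have a0t := anc_trans he hl a0r n0r art.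
    split => //; case: a0t => _ _ _ h; split => //.
    by apply: le_trans h _; apply: Iinf_mono.
  rewrite d0t adde0.
  have [I0s|I0s] := leP 0 (Iinf e 0 s).
    have a0s : anc e 0 s by split; rewrite ?lft0.
    have I0t : Iinf e 0 t < 0.
      rewrite ltNge; apply/negP => h; apply: (nC 0); split => //.
      by split; rewrite ?lft0 // ltW.
    have IE : Iinf e s t = Iinf e 0 t.
      have := I0t; rewrite (Iinf_split he (lexx 0) s0 ts t1) gt_min.
      move=> /orP[h|h]; first by rewrite ltNge I0s in h.
      by rewrite min_r // ltW // (lt_le_trans h I0s).
    have h1 : (d0 e 0 s <= (e s - Iinf e 0 s)%:E)%E.
      apply: d0_le => //; last exact: Iinf_le_end.
      by move=> w w0 ws; apply: Iinf_le_end => //; exact: ltW.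
    apply: le_trans (leeD (lexx _) h1) _; rewrite -EFinD lee_fin.
    rewrite -IE in I0t; lra.
  have d0s : d0 e 0 s = 0%E.
    apply: esum_empty => r [[a0r n0r] ars].
    have [_ _ _ h] := anc_trans he hl a0r n0r ars.
    by move: h; rewrite lft0 leNgt I0s.
  rewrite d0s adde0 lee_fin; lra.
- have P := P3 he hl hr s0 st t1 Cu umax.
  set u := mrca e s t in Cu umax P *.
  case: Cu => -[u0 _ us hus] [_ _ ut hut].
  have h1 : (d0 e u s <= (e s - Iinf e u s)%:E)%E.
    apply: d0_le => //; last exact: Iinf_le_end.
    by move=> w w0 ws; apply: Iinf_le_end => //; exact: ltW.
  have h2 : (d0 e u t <= (lft e t - Iinf e u t)%:E)%E.
    apply: d0_le => //; first by move=> w w0 wt; apply: Iinf_le_lft.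
    by apply: Iinf_le_lft => //; exact: le_lt_trans st.
  have h0 : ldelta e u (xpos e u s) (xpos e u t) <= Iinf e u s - Iinf e u t.
    apply: le_trans (ldelta_le _ _ _ _) _.
    have Hm : Iinf e u t <= Iinf e u s by apply: Iinf_mono.
    rewrite /xpos (_ : _ - _ - _ = Iinf e u s - Iinf e u t); last by ring.
    by rewrite ger0_norm ?subr_ge0.
  apply: le_trans (leeD (leeD (lexx _) h1) h2) _.
  rewrite -!EFinD lee_fin; rewrite P in h0 h2 *; lra.
Qed.

Definition lcont e := forall r, 0 < r <= 1 -> lft e r = e r.

Lemma part_ii_L e s t : e 0 = 0 -> lbd e -> hasll e -> lcont e ->
  0 <= s -> s < t -> t <= 1 ->
  (ldist e s t <= (e s + lft e t - 2 * Iinf e s t)%:E)%E.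
Proof.
move=> e0 he hl hc s0 st t1.
have ts := ltW st; have s1 : s <= 1 := le_trans ts t1.
have Iss : Iinf e s t <= e s by apply: Iinf_le => //; rewrite lexx.
have Ilt : Iinf e s t <= lft e t by apply: Iinf_le_lft.
have j0 : forall r, 0 <= r <= 1 -> jmp e r = 0.
  move=> r /andP[r0 r1]; rewrite jmpE //; have [->|rn] := eqVneq r 0.
    by rewrite e0 lft0 subr0.
  by rewrite hc ?subrr // r1 andbT lt_neqAle eq_sym rn r0.
have dle : forall x, (d0 e (mrca e s t) x <= 0)%E.
  move=> x; apply: esum_le0' => r [_ [r0 x1 rx _]].
  by rewrite lee_fin; apply: ldelta_le0; apply: j0; rewrite r0 (le_trans rx x1).
rewrite /ldist /=.
have u01 : 0 <= mrca e s t <= 1.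
  case: (mrca_spec he hl s0 ts t1) => [[_ ->]|[[[u0 _ us _] _] _]].
    by rewrite lexx ler01.
  by rewrite u0 (le_trans us s1).
have dl := @ldelta_le0 e (mrca e s t) (xpos e (mrca e s t) s) (xpos e (mrca e s t) t) (j0 _ u01).
apply: le_trans (leeD (leeD (lexx _) (dle s)) (dle t)) _.
rewrite !adde0 lee_fin; lra.
Qed.


Lemma near_right_delta (a : R) (P : R -> Prop) : (\forall x \near a^'+, P x) ->
  exists2 d, 0 < d & forall x, a < x < a + d -> P x.
Proof.
rewrite near_withinE => /nbhs_ballP [d /= d0 H]; exists d => // x /andP[h1 h2].
apply: H => //; rewrite /ball /= ltr0_norm ?subr_lt0 // opprB.
by rewrite ltrBlDl.
Qed.

Definition RC (f : R -> R) := forall t, 0 <= t -> f x @[x --> t^'+] --> f t.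
Definition LL (f : R -> R) := forall t, 0 < t -> cvg (f x @[x --> t^'-]).

Lemma cadlag_lbd f a b : 0 <= a -> a <= b -> RC f -> LL f ->
  exists M, forall y, a <= y <= b -> M <= f y.
Proof.
move=> a0 ab hr hl.
set S := fun x => a <= x <= b /\ exists M, forall y, a <= y <= x -> M <= f y.
have Sa : S a.
  split; first by rewrite lexx ab.
  by exists (f a) => y /andP[ay ya]; have -> : y = a by apply/le_anti; rewrite ya ay.
have ubS : ubound S b by move=> x [/andP[_ ->]].
have hsS : has_sup S by split; [exists a | exists b].
set m := sup S.
have am : a <= m by apply: ub_le_sup => //; exists b.
have mb : m <= b by apply: ge_sup => //; exists a.
have Sm : S m.
  case: (pselect (S m)) => // nSm.
  have amlt : a < m.
    rewrite lt_neqAle am andbT; apply/eqP => amE; apply: nSm; by rewrite -amE.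
  have m0 : 0 < m := le_lt_trans a0 amlt.
  have Lcv : f x @[x --> m^'-] --> lim (f x @[x --> m^'-]) := hl m m0.
  set L := lim _ in Lcv.
  have L1 : L - 1 < L by rewrite ltrBlDr ltrDl.
  have [d d0 Hd] := near_left_delta (cvgr_gt L Lcv (L - 1) L1).
  have d'0 : 0 < Num.min d (m - a) by rewrite lt_min d0 subr_gt0 amlt.
  have [x Sx xd] := sup_adherent d'0 hsS.
  have xm : x <= m by apply: ub_le_sup => //; exists b.
  have xlt : x < m.
    by rewrite lt_neqAle xm andbT; apply/eqP => xE; apply: nSm; rewrite -xE.
  case: (Sx) => _ [M1 HM1].
  split; first by rewrite am mb.
  exists (Num.min M1 (Num.min (L - 1) (f m))) => y /andP[ay ym].
  have [yx|xy] := leP y x.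
    by rewrite ge_min; apply/orP; left; apply: HM1; rewrite ay yx.
  have [ymE|ymn] := eqVneq y m.
    by rewrite ymE !ge_min lexx !orbT.
  have ylt : y < m by rewrite lt_neqAle ymn ym.
  rewrite !ge_min; apply/orP; right; apply/orP; left; apply/ltW; apply: Hd.
  rewrite ylt andbT; apply: le_lt_trans xy; apply: ltW; apply: le_lt_trans xd.
  by rewrite lerD2l lerN2 ge_min lexx.
have mE : m = b.
  apply/le_anti; rewrite mb /=; rewrite leNgt; apply/negP => mlt.
  have Rcv := hr m (le_trans a0 am).
  have fm1 : f m - 1 < f m by rewrite ltrBlDr ltrDl.
  have [d d0 Hd] := near_right_delta (cvgr_gt (f m) Rcv (f m - 1) fm1).
  set h := Num.min d (b - m) / 2.
  have h0 : 0 < h by rewrite divr_gt0 // lt_min d0 subr_gt0 mlt.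
  have hd : h < Num.min d (b - m) by rewrite /h ltr_pdivrMr // ltr_pMr ?ltr1n // lt_min d0 subr_gt0 mlt.
  have Sx : S (m + h).
    case: Sm => _ [M HM]; split.
      have hb : h < b - m by apply: lt_le_trans hd _; rewrite ge_min lexx orbT.
      apply/andP; split; lra.
    exists (Num.min M (f m - 1)) => y /andP[ay ymh].
    have [ym|my] := leP y m.
      by rewrite ge_min; apply/orP; left; apply: HM; rewrite ay ym.
    rewrite ge_min; apply/orP; right; apply/ltW; apply: Hd; rewrite my /=.
    apply: le_lt_trans ymh _; rewrite ltrD2l; apply: lt_le_trans hd _.
    by rewrite ge_min lexx.
  have := ub_le_sup (ex_intro _ b ubS) Sx; rewrite -/m leNgt => /negP; apply.
  by rewrite ltrDl.
by case: Sm; rewrite mE => _ [M HM]; exists M.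
Qed.


Lemma aff_cont (a k t : R) : (fun x => a + x * k) @ t --> a + t * k.
Proof.
apply: (@cvgD _ _ _ _ _ (fun=> a) (fun x => x * k)); first exact: cvg_cst.
by apply: cvgMr_tmp; exact: cvg_id.
Qed.

Lemma aff_rr (a k t : R) : 0 < k -> (fun x => a + x * k) @ t^'+ `=>` (a + t * k)^'+.
Proof.
move=> k0 P HP.
have {}HP : \forall y \near (a + t * k)^'+, P y := HP.
change (\forall x \near t^'+, P (a + x * k)).
rewrite near_withinE in HP.
have := @aff_cont a k t _ HP; rewrite /=.
rewrite /at_right near_withinE.
move=> H0.
have H' : \forall x \near t, (a + t * k < a + x * k -> P (a + x * k)) := H0.
apply: filterS H' => x H tx; apply: H => /=.
by rewrite ltrD2l ltr_pM2r.
Qed.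

Lemma aff_ll (a k t : R) : 0 < k -> (fun x => a + x * k) @ t^'- `=>` (a + t * k)^'-.
Proof.
move=> k0 P HP.
have {}HP : \forall y \near (a + t * k)^'-, P y := HP.
change (\forall x \near t^'-, P (a + x * k)).
rewrite near_withinE in HP.
have := @aff_cont a k t _ HP; rewrite /=.
rewrite /at_left near_withinE.
move=> H0.
have H' : \forall x \near t, (a + x * k < a + t * k -> P (a + x * k)) := H0.
apply: filterS H' => x H tx; apply: H => /=.
by rewrite ltrD2l ltr_pM2r.
Qed.

Lemma aff_lr (a k t : R) : k < 0 -> (fun x => a + x * k) @ t^'- `=>` (a + t * k)^'+.
Proof.
move=> k0 P HP.
have {}HP : \forall y \near (a + t * k)^'+, P y := HP.
change (\forall x \near t^'-, P (a + x * k)).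
rewrite near_withinE in HP.
have := @aff_cont a k t _ HP; rewrite /=.
rewrite /at_left near_withinE.
move=> H0.
have H' : \forall x \near t, (a + t * k < a + x * k -> P (a + x * k)) := H0.
apply: filterS H' => x H tx; apply: H => /=.
by rewrite ltrD2l ltr_nM2r.
Qed.


Lemma aff_props (f : R -> R) (a k c : R) : 0 <= a -> 0 <= a + k -> 0 <= c ->
  RC f -> LL f ->
  let e := fun s => c * (f (a + s * k) - f a) in
  [/\ e 0 = 0, lbd e, hasll e & (rcont e \/ lcont e)].
Proof.
move=> a0 ak0 c0 hr hl e.
have tau0 : forall s, 0 <= s <= 1 -> 0 <= a + s * k.
  move=> s /andP[s0 s1].
  have -> : a + s * k = (1 - s) * a + s * (a + k) by ring.
  by rewrite addr_ge0 // mulr_ge0 // subr_ge0.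
have e0 : e 0 = 0 by rewrite /e mul0r addr0 subrr mulr0.
have eC : forall F, Filter F -> forall (g : R -> R) (l : R),
    g x @[x --> F] --> l -> c * (g x - f a) @[x --> F] --> c * (l - f a).
  move=> F FF g l H; apply: cvgMl_tmp.
  apply: (@cvgB _ _ _ _ _ g (fun=> f a)) => //; exact: cvg_cst.
split => //.
- have [M HM] := @cadlag_lbd f 0 (a + `|k|) (lexx 0) (addr_ge0 a0 (normr_ge0 k)) hr hl.
  exists (c * (M - f a)) => s /andP[s0 s1].
  rewrite /e ler_wpM2l // lerD2r; apply: HM; rewrite tau0 ?s0 ?s1 //=.
  rewrite lerD2l; apply: le_trans (ler_norm _) _.
  by rewrite normrM ger0_norm // ler_piMl.
- have [k0|k0|k0] := ltgtP k 0.
  + move=> t /andP[t0 t1]; apply: (cvgP (c * (f (a + t * k) - f a))).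
    apply: eC; apply: (@cvg_comp _ _ _ (fun x => a + x * k) f _ _ _ (@aff_lr a k t k0)); apply: hr; apply: tau0.
    by rewrite ltW.
  + move=> t /andP[t0 t1].
    have tp : 0 < a + t * k by apply: ltr_wpDl => //; exact: mulr_gt0.
    have := hl _ tp; move=> /cvg_ex [l Hl].
    apply: (cvgP (c * (l - f a))); apply: eC; exact: (@cvg_comp _ _ _ (fun x => a + x * k) f _ _ _ (@aff_ll a k t k0) Hl).
  + move=> t _; rewrite /e k0.
    under eq_fun do rewrite mulr0 addr0 subrr mulr0.
    exact: cvgP (cvg_cst _).
- have [k0|k0|k0] := ltgtP k 0.
  + right => r /andP[r0 r1]; rewrite /lft (gt_eqF r0); apply: cvg_lim => //.
    apply: eC; apply: (@cvg_comp _ _ _ (fun x => a + x * k) f _ _ _ (@aff_lr a k r k0)); apply: hr; apply: tau0.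
    by rewrite ltW.
  + left => t /andP[t0 t1].
    apply: eC; apply: (@cvg_comp _ _ _ (fun x => a + x * k) f _ _ _ (@aff_rr a k t k0)); apply: hr; apply: tau0.
    by rewrite t0 ltW.
  + left => t _; rewrite /e k0.
    under eq_fun do rewrite mulr0 addr0 subrr mulr0.
    rewrite mulr0 addr0 subrr mulr0; exact: cvg_cst.
Qed.

End Det.

Theorem lemma2p1 (R : realType) (alpha : R) (d : measure_display)
  (T : measurableType d) (P : probability T R) (X : R -> T -> R) :
  1 < alpha < 2 ->
  stable_spos_levy alpha P X ->
  {ae P, forall w,
    let e := normexc alpha (X^~ w) in
    forall r s t : R, 0 <= r <= 1 -> 0 <= s <= 1 -> 0 <= t <= 1 ->
      (sanc e s r -> sanc e r t ->
         (Num.min (xpos e r t) (jmp e r - xpos e r t))%:E <= ldist e s t)%E /\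
      (s < t ->
         (ldist e s t <= (e s + lft e t - 2 * Iinf e s t)%:E)%E)}.
Proof.
move=> _ [X0 [_ [Xrc [Xll _]]]].
apply: aeW => w /=; set f := X^~ w; set e := normexc alpha f.
move=> r s t /andP[r0 r1] /andP[s0 s1] /andP[t0 t1].
have hr : RC f by move=> u hu; exact: Xrc w u hu.
have hl : LL f by move=> u hu; exact: Xll w u hu.
have g0 : 0 <= gone f.
  rewrite /gone; case: (pselect (exists x, 0 <= x <= 1 /\ f x = runinf f x)).
    move=> [x [/andP[x0 x1] hx]]; suff : x <= gone f by apply: le_trans.
    by apply: ub_le_sup; [exists 1 => y [/andP[_ ->]] | split => //; rewrite x0 x1].
  move=> nG; rewrite (_ : [set _ | _] = set0) ?sup0 //.
  by apply/predeqP => y; split => // hy; apply: nG; exists y.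
have d0 : 0 <= done_ f.
  rewrite /done_; case: (pselect (exists x, 1 < x /\ f x = runinf f x)).
    move=> [x hx]; suff : 1 <= done_ f by apply: le_trans; exact: ler01.
    apply: lb_le_inf; first by exists x.
    by move=> y [/ltW].
  move=> nD; rewrite (_ : [set _ | _] = set0) ?inf0 //.
  by apply/predeqP => y; split => // hy; apply: nD; exists y.
have gk : 0 <= gone f + (done_ f - gone f) by rewrite addrC subrK.
have [e0 he hll hrl] : [/\ e 0 = 0, lbd e, hasll e & (rcont e \/ lcont e)].
  have H := @aff_props R f (gone f) (done_ f - gone f)
    ((done_ f - gone f) `^ (- alpha^-1)) g0 gk (powR_ge0 _ _) hr hl.
  exact: H.
split.
  by move=> h1 h2; apply: part_i.
move=> st; case: hrl => [hrc|hlc].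
  exact: part_ii_R.
exact: part_ii_L.
Qed.
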